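(* Let $g(q),h(q)\in\mathbb Z[q]$. Let $G$ be the functor from $\mathbb Z[q]\otimes\Psi$-Rings to abelian groups sending $R$ to the additive group $R^{\mathbb N}$ (componentwise addition) and a morphism $f$ to $\alpha\mapsto f\circ\alpha$, and for each object $R$ let $(\overline\varphi_{\rm ab})^{g(q)}_R:G(R)\to G(R)$, $(a_n)_{n\in\mathbb N}\mapsto\big(\sum_{d|n}d[\frac nd]_{g(q)}\Psi^{n/d}(a_d)\big)_{n\in\mathbb N}$. Then there exists a natural isomorphism $\omega:G\to G$ such that $(\overline\varphi_{\rm ab})^{g(q)}_R=(\overline\varphi_{\rm ab})^{h(q)}_R\circ\omega_R$ for all $R$ if and only if $1-g(q)=c_1k(q)$ and $1-h(q)=c_2k(q)$ for some $c_1,c_2\in\mathbb Z$ and $k(q)\in\mathbb Z[q]$ such that (1) $c_1$ and $c_2$ have the same set of prime divisors, and (2) $k(q)$ is primitive.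
   Context: A $\Psi$-ring is a commutative unital ring with maps $\Psi^n$ ($n\ge1$) that are unital ring endomorphisms with $\Psi^1=\mathrm{id}$ and $\Psi^n\Psi^m=\Psi^{nm}$. The category $\mathbb Z[q]\otimes\Psi$-Rings has as objects $\mathbb Z[q]$-algebras with a $\Psi$-ring structure satisfying $\Psi^n(q)=q^n$ for all $n$, and as morphisms unity-preserving $\mathbb Z[q]$-algebra homomorphisms commuting with the $\Psi^n$. $[n]_{g(q)}=1+g(q)+\dots+g(q)^{n-1}$. A nonzero polynomial in $\mathbb Z[q]$ is primitive if the only integers dividing all its coefficients are $\pm1$. *)

(* Defs.v *)
From HB Require Import structures.
From mathcomp Require Import all_boot all_order all_algebra.
Set Implicit Arguments. Unset Strict Implicit. Unset Printing Implicit Defensive.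
Import Order.TTheory GRing.Theory Num.Theory.
Local Open Scope ring_scope.

(* An object of Z[q] (x) Psi-Rings: a commutative unital ring (the zero ring
   allowed) with a distinguished element [qe] (the image of q, which determines
   the Z[q]-algebra structure since Z[q] is free on q), and operations
   [psi n] for n >= 1 (the value at n = 0 is irrelevant junk). *)
Record psiQRing := PsiQRing {
  carrier :> comPzRingType;
  qe : carrier;
  psi : nat -> carrier -> carrier;
  psiD : forall n, (0 < n)%N -> forall x y, psi n (x + y) = psi n x + psi n y;
  psiM : forall n, (0 < n)%N -> forall x y, psi n (x * y) = psi n x * psi n y;
  psi1 : forall n, (0 < n)%N -> psi n 1 = 1;
  psi_id : forall x, psi 1 x = x;
  psi_comp : forall n m, (0 < n)%N -> (0 < m)%N ->
    forall x, psi n (psi m x) = psi (n * m) x;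
  psi_q : forall n, (0 < n)%N -> psi n qe = qe ^+ n
}.

Definition is_psiQ_morph (R S : psiQRing) (f : R -> S) : Prop :=
  [/\ forall x y, f (x + y) = f x + f y,
      forall x y, f (x * y) = f x * f y,
      f 1 = 1,
      f (@qe R) = @qe S &
      forall n, (0 < n)%N -> forall x, f (@psi R n x) = @psi S n (f x)].

Definition evalq (R : psiQRing) (g : {poly int}) : R :=
  \sum_(i < size g) (g`_i)%:~R * @qe R ^+ i.

Definition qint (R : comPzRingType) (m : nat) (x : R) : R :=
  \sum_(i < m) x ^+ i.

(* G(R) = R^N with N = {1,2,...}; a sequence (a_n)_{n>=1} is represented as
   a : nat -> R with a i = a_{i+1}. *)
Definition Gseq (R : psiQRing) := nat -> R.

Definition phibar (g : {poly int}) (R : psiQRing) (a : Gseq R) : Gseq R :=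
  fun i => let n := i.+1 in
    \sum_(d <- divisors n)
      d%:R * qint (n %/ d) (evalq R g) * @psi R (n %/ d) (a d.-1).

Definition primitive_poly (k : {poly int}) : Prop :=
  k != 0 /\ forall d : int, (forall i, (d %| k`_i)%Z) -> `|d| = 1.

(* Main.v *)
Require Import Defs.
From HB Require Import structures.
From mathcomp Require Import all_boot all_order all_algebra.
Import Order.TTheory GRing.Theory Num.Theory.
Local Open Scope ring_scope.
From mathcomp Require Import finfield ring.
From Stdlib Require Import FunctionalExtensionality.
Set Implicit Arguments. Unset Strict Implicit. Unset Printing Implicit Defensive.
Set Warnings "-notation-overridden -ambiguous-paths -deprecated".

(* Proof outline:
   (<-) we build omega from the twisted Dirichlet quotient gam = alpha_h^-1 * alpha_g,
        showing n | gam n via p-local arguments (cases p | c and p not| c);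
   (->) we evaluate the factorization on Z[q] to get p | [p]_g - [p]_h, and
        deduce the content/primitive decomposition over F_p. *)
Definition pd (m : int) (f : {poly int}) : Prop := forall i, (m %| f`_i)%Z.

Lemma pd0 m : pd m 0.
Proof. by move=> i; rewrite coef0 dvdz0. Qed.
Lemma pdD m f g : pd m f -> pd m g -> pd m (f + g).
Proof. by move=> hf hg i; rewrite coefD rpredD. Qed.
Lemma pdN m f : pd m f -> pd m (- f).
Proof. by move=> hf i; rewrite coefN rpredN. Qed.
Lemma pdB m f g : pd m f -> pd m g -> pd m (f - g).
Proof. by move=> hf hg; apply: pdD => //; apply: pdN. Qed.
Lemma pd_sum m (I : Type) (r : seq I) (P : pred I) (F : I -> {poly int}) :
  (forall i, P i -> pd m (F i)) -> pd m (\sum_(i <- r | P i) F i).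
Proof.
move=> H; elim/big_ind: _ => //; [exact: pd0 | exact: pdD].
Qed.
Lemma pdMM a b f g : pd a f -> pd b g -> pd (a * b) (f * g).
Proof.
move=> hf hg i; rewrite coefM; apply: rpred_sum => j _.
exact: dvdz_mul.
Qed.
Lemma pd1 f : pd 1 f.
Proof. by move=> i; rewrite dvd1z. Qed.
Lemma pdMl a f g : pd a f -> pd a (f * g).
Proof. by move=> hf; rewrite -[a]mulr1; apply: pdMM => //; apply: pd1. Qed.
Lemma pdMr a f g : pd a g -> pd a (f * g).
Proof. by move=> hg; rewrite -[a]mul1r; apply: pdMM => //; apply: pd1. Qed.
Lemma pd_dvd a b f : (a %| b)%Z -> pd b f -> pd a f.
Proof. by move=> hab hf i; apply: dvdz_trans hab (hf i). Qed.
Lemma pdZ a f : pd a (a *: f).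
Proof. by move=> i; rewrite coefZ dvdz_mulr. Qed.
Lemma pdZl a c f : pd a f -> pd a (c *: f).
Proof. by move=> hf i; rewrite coefZ dvdz_mull. Qed.
Lemma pdZZ a c f : pd a f -> pd (c * a) (c *: f).
Proof. by move=> hf i; rewrite coefZ dvdz_mul. Qed.

Definition sig (j : nat) (f : {poly int}) := f \Po 'X^j.

Lemma pd_sig m j f : (0 < j)%N -> pd m f -> pd m (sig j f).
Proof.
move=> j0 hf i; rewrite /sig coef_comp_poly_Xn //.
by case: ifP => _; [apply: hf | apply: dvdz0].
Qed.

Lemma pdE m f : pd m f -> exists D, f = m *: D.
Proof.
move=> hf; exists (\poly_(i < size f) ((f`_i) %/ m)%Z).
apply/polyP => i; rewrite coefZ coef_poly.
case: ltnP => hi; first by rewrite mulrC divzK.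
by rewrite mulr0 nth_default.
Qed.

Lemma pd_contents m f : pd m f <-> (m %| zcontents f)%Z.
Proof.
rewrite dvdz_contents; split.
  by move=> hf; apply/polyOverP => i; apply: hf.
by move/polyOverP => hf i; apply: hf.
Qed.

Lemma pd_gauss (p : nat) r x g : prime p -> ~ pd p%:Z x ->
  pd (p ^ r)%N%:Z (x * g) -> pd (p ^ r)%N%:Z g.
Proof.
move=> pp nx /pd_contents; rewrite zcontentsM => h; apply/pd_contents.
rewrite -(@Gauss_dvdzr _ (zcontents x)) //.
rewrite coprimezE.
have -> : `|(p ^ r)%:Z|%N = (p ^ r)%N by [].
apply: coprimeXl; rewrite prime_coprime //.
by apply/negP => hd; apply: nx; apply/pd_contents; rewrite dvdzE.
Qed.

Section Fp.
Variable p : nat.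
Hypothesis pp : prime p.

Definition phi (f : {poly int}) : {poly 'F_p} := map_poly (intr : int -> 'F_p) f.

Lemma pd_Fp f : pd p%:Z f <-> phi f = 0.
Proof.
split=> [hf|hf i].
  by apply/polyP => i; rewrite coef_map coef0 /=; apply/eqP; rewrite -(dvdz_pcharf (pchar_Fp pp)).
have := congr1 (fun q : {poly 'F_p} => q`_i) hf; rewrite coef_map coef0 /= => /eqP.
by rewrite -(dvdz_pcharf (pchar_Fp pp)).
Qed.

Lemma frob_poly (f : {poly 'F_p}) : f ^+ p = f \Po 'X^p.
Proof.
have hp : p \in [pchar {poly 'F_p}] by rewrite pchar_poly pchar_Fp.
elim/poly_ind: f => [|q c IH].
  by rewrite comp_poly0 expr0n /=; case: p pp.
rewrite comp_poly_MXaddC -IH.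
have := pFrobenius_autD_comm hp (mulrC (q * 'X) c%:P).
rewrite !pFrobenius_autE => ->.
rewrite exprMn -polyC_exp.
have -> : c ^+ p = c.
  have := expf_card c; by rewrite card_Fp.
done.
Qed.

Lemma pd_frob g : pd p%:Z (g ^+ p - sig p g).
Proof.
apply/pd_Fp; rewrite /phi rmorphB rmorphXn /= /sig map_comp_poly map_polyXn.
by rewrite frob_poly subrr.
Qed.

End Fp.

Lemma pdX a f j : pd a f -> pd (a ^+ j) (f ^+ j).
Proof.
move=> hf; elim: j => [|j IH]; first by rewrite !expr0; apply: pd1.
by rewrite !exprS; apply: pdMM.
Qed.

Lemma pdMn a f n : pd a f -> pd a (f *+ n).
Proof. by move=> hf; rewrite -scaler_nat; apply: pdZl. Qed.

Lemma pd_XX c a b s : pd c (a - b) -> pd c (a ^+ s - b ^+ s).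
Proof. by move=> h; rewrite subrXX; apply: pdMl. Qed.

Lemma pd_lift (p k : nat) A B : prime p -> (0 < k)%N ->
  pd (p%:Z ^+ k) (A - B) -> pd (p%:Z ^+ k.+1) (A ^+ p - B ^+ p).
Proof.
move=> pp k0 /pdE [D hD].
have -> : A = B + (p%:Z ^+ k) *: D by rewrite -hD addrC subrK.
set E := _ *: D.
have hE : pd (p%:Z ^+ k) E by apply: pdZ.
rewrite exprDn big_ord_recl /= subn0 expr0 mulr1 bin0 mulr1n addrC addKr.
apply: pd_sum => i _; rewrite -mulrnAr; apply: pdMr.
have [hi|hi] := ltnP (bump 0 i) p.
  have hb : (0 < bump 0 i < p)%N by rewrite hi andbT.
  have /dvdnP [c hc] := prime_dvd_bin pp hb.
  rewrite hc -scaler_nat natrM -scalerA; apply: pdZl.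
  rewrite scaler_nat -scaler_nat.
  apply: (@pd_dvd _ (p%:R * p%:Z ^+ k)); first by rewrite exprS natz.
  apply: pdZZ; apply: (@pd_dvd _ ((p%:Z ^+ k) ^+ (bump 0 i))).
    by rewrite -exprM dvdz_exp2l // leq_pmulr.
  exact: pdX.
have ip : bump 0 i = p.
  by apply/eqP; rewrite eqn_leq hi andbT /bump /= add1n; exact: ltn_ord i.
rewrite ip binn mulr1n.
apply: (@pd_dvd _ ((p%:Z ^+ k) ^+ p)); last exact: pdX.
rewrite -exprM dvdz_exp2l //.
have p2 := prime_gt1 pp.
rewrite -[k.+1]addn1 -{1}[p]prednK ?mulnS ?(ltnW p2) // leq_add2l.
by rewrite muln_gt0 k0 -ltnS prednK // ltnW.
Qed.

Lemma pd_lift_pow (p : nat) A B : prime p -> pd p%:Z (A - B) ->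
  forall m, (0 < m)%N -> pd (p%:Z ^+ (logn p m).+1) (A ^+ m - B ^+ m).
Proof.
move=> pp h m m0.
have hv : forall v, pd (p%:Z ^+ v.+1) (A ^+ (p ^ v) - B ^+ (p ^ v)).
  elim=> [|v IH]; first by rewrite !expn0 !expr1.
  by rewrite expnSr !exprM; apply: pd_lift.
rewrite -[in A ^+ m](partnC p m0) -[in B ^+ m](partnC p m0) p_part !exprM.
apply: pd_XX; exact: hv.
Qed.

Lemma qint_tel (R : comPzRingType) n (x : R) : (1 - x) * qint n x = 1 - x ^+ n.
Proof.
elim: n => [|n IH]; first by rewrite /qint big_ord0 mulr0 expr0 subrr.
rewrite /qint big_ord_recr /= mulrDr -/(qint n x) IH exprS.
by rewrite mulrBl mul1r addrA subrK mulrC.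
Qed.

Lemma qint1 (R : comPzRingType) n : qint n (1 : R) = n%:R.
Proof.
by rewrite /qint (eq_bigr (fun _ => 1)) ?sumr_const ?card_ord // => i _; rewrite expr1n.
Qed.

Lemma qintM a b (g : {poly int}) : qint (a * b) g = qint a g * qint b (g ^+ a).
Proof.
have [->|g1] := eqVneq g 1.
  by rewrite expr1n !qint1 natrM.
have nz : 1 - g != 0 by rewrite subr_eq0 eq_sym.
apply: (mulfI nz).
by rewrite qint_tel mulrA qint_tel qint_tel -exprM.
Qed.

Lemma pd_natr (p : nat) : pd p%:Z (p%:R : {poly int}).
Proof.
have -> : (p%:R : {poly int}) = (p%:Z) *: 1 by rewrite -natz scaler_nat.
exact: pdZ.
Qed.

Lemma pd_one_sub_pow (m : int) g a : pd m (1 - g) -> pd m (1 - g ^+ a).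
Proof. by move=> h; rewrite -[1](expr1n _ a); apply: pd_XX. Qed.

Lemma pd_qint_p (p : nat) g : pd p%:Z (1 - g) -> pd p%:Z (qint p g).
Proof.
move=> h.
have -> : qint p g = p%:R - \sum_(i < p) (1 - g ^+ i).
  rewrite sumrB sumr_const card_ord /qint opprB addrC subrK.
  by [].
apply: pdB; first exact: pd_natr.
by apply: pd_sum => i _; apply: pd_one_sub_pow.
Qed.

Lemma pd_qint_caseI (p : nat) : prime p ->
  forall k g n, pd p%:Z (1 - g) -> (0 < n)%N -> logn p n = k ->
  pd (n`_p)%:Z (qint n g).
Proof.
move=> pp; elim=> [|k IH] g n hg n0 hk.
  by rewrite p_part hk expn0; apply: pd1.
have : (p %| n)%N.
  have : (0 < logn p n)%N by rewrite hk.
  by rewrite logn_gt0 mem_primes => /and3P [].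
case/dvdnP=> m hm; rewrite hm mulnC in n0 hk *.
have m0 : (0 < m)%N by move: n0; rewrite muln_gt0 => /andP [].
have p0 := prime_gt0 pp.
rewrite partnM // part_pnat_id ?pnat_id // PoszM qintM.
apply: pdMM; first exact: pd_qint_p.
apply: IH => //; first exact: pd_one_sub_pow.
by move: hk; rewrite lognM // logn_prime // eqxx add1n => [[]].
Qed.

Lemma pd_partP n f : (0 < n)%N -> (forall p, prime p -> pd (n`_p)%:Z f) -> pd n%:Z f.
Proof.
move=> n0 H i; rewrite dvdzE /=; apply/dvdn_partP => // p.
rewrite mem_primes => /and3P [pp _ _]; have := H p pp i; by rewrite dvdzE.
Qed.

Lemma mem_div_pos d n : d \in divisors n -> d != 1%N -> (0 < n)%N.
Proof. by case: n => //; rewrite /divisors /= inE => ->. Qed.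

Lemma div_dvd d n : (0 < n)%N -> d \in divisors n -> (d %| n)%N.
Proof. by move=> n0; rewrite -dvdn_divisors. Qed.

Section Reindex.
Variable V : zmodType.

Lemma sum_div_mul (e n : nat) (F : nat -> V) : (0 < n)%N -> (e %| n)%N ->
  \sum_(d <- divisors n | (e %| d)%N) F d = \sum_(t <- divisors (n %/ e)%N) F (e * t)%N.
Proof.
move=> n0 en.
have e0 : (0 < e)%N by apply: dvdn_gt0 en.
have ne0 : (0 < n %/ e)%N by rewrite divn_gt0 // dvdn_leq.
rewrite -big_filter -(big_map (fun t => e * t)%N xpredT).
apply: perm_big; apply: uniq_perm.
- by rewrite filter_uniq // divisors_uniq.
- rewrite map_inj_uniq ?divisors_uniq // => x y /eqP; rewrite eqn_pmul2l // => /eqP.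
  done.
move=> x; rewrite mem_filter -dvdn_divisors //; apply/andP/mapP.
  case=> /dvdnP [t ->] hx; exists t; last by rewrite mulnC.
  rewrite -dvdn_divisors //.
  by rewrite dvdn_divRL // mulnC.
case=> t; rewrite -dvdn_divisors // => ht ->; split; first exact: dvdn_mulr.
by move: ht; rewrite dvdn_divRL // mulnC.
Qed.

Lemma sum_div_rev (n : nat) (F : nat -> V) : (0 < n)%N ->
  \sum_(d <- divisors n) F d = \sum_(d <- divisors n) F (n %/ d)%N.
Proof.
move=> n0; rewrite -(big_map (fun d => (n %/ d)%N) xpredT).
apply: perm_big; apply: uniq_perm.
- by rewrite divisors_uniq.
- rewrite map_inj_in_uniq ?divisors_uniq // => x y.
  rewrite -!dvdn_divisors // => hx hy hxy.
  have x0 : (0 < x)%N by apply: dvdn_gt0 hx.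
  have y0 : (0 < y)%N by apply: dvdn_gt0 hy.
  have q0 : (0 < n %/ x)%N by rewrite divn_gt0 // dvdn_leq.
  apply/eqP; rewrite -(eqn_pmul2l q0); apply/eqP.
  by rewrite {2}hxy !divnK.
move=> x; rewrite -dvdn_divisors //; apply/idP/mapP.
  move=> hx; exists (n %/ x)%N; first by rewrite -dvdn_divisors // dvdn_div.
  have x0 : (0 < x)%N by apply: dvdn_gt0 hx.
  by rewrite -{1}(divnK hx) mulKn // divn_gt0 // dvdn_leq.
case=> y; rewrite -dvdn_divisors // => hy ->; exact: dvdn_div.
Qed.

Lemma sum_div_exch (n : nat) (F : nat -> nat -> V) : (0 < n)%N ->
  \sum_(d <- divisors n) \sum_(e <- divisors d) F d e =
  \sum_(e <- divisors n) \sum_(d <- divisors n | (e %| d)%N) F d e.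
Proof.
move=> n0.
transitivity (\sum_(d <- divisors n) \sum_(e <- divisors n | (e %| d)%N) F d e).
  rewrite big_seq_cond [RHS]big_seq_cond; apply: eq_bigr => d.
  rewrite andbT -dvdn_divisors // => hd.
  have d0 : (0 < d)%N by apply: dvdn_gt0 hd.
  rewrite -[RHS]big_filter; apply: perm_big; apply: uniq_perm.
  - by rewrite divisors_uniq.
  - by rewrite filter_uniq // divisors_uniq.
  move=> e; rewrite mem_filter -!dvdn_divisors //.
  by apply/idP/andP => [he|[]//]; split => //; apply: dvdn_trans he hd.
by rewrite (exchange_big_dep xpredT).
Qed.

End Reindex.

Lemma sig1 f : sig 1 f = f.
Proof. by rewrite /sig expr1 comp_polyXr. Qed.
Lemma sigD j f g : sig j (f + g) = sig j f + sig j g.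
Proof. exact: comp_polyD. Qed.
Lemma sigB j f g : sig j (f - g) = sig j f - sig j g.
Proof. exact: comp_polyB. Qed.
Lemma sigM j f g : sig j (f * g) = sig j f * sig j g.
Proof. exact: comp_polyM. Qed.
Lemma sigZ j c f : sig j (c *: f) = c *: sig j f.
Proof. exact: comp_polyZ. Qed.
Lemma sig_one j : sig j 1 = 1.
Proof. by rewrite /sig -polyC1 comp_polyC. Qed.
Lemma sigX j f k : sig j (f ^+ k) = sig j f ^+ k.
Proof.
elim: k => [|k IH]; first by rewrite !expr0 sig_one.
by rewrite !exprS sigM IH.
Qed.
Lemma sig_sum j (I : Type) (r : seq I) (P : pred I) (F : I -> {poly int}) :
  sig j (\sum_(i <- r | P i) F i) = \sum_(i <- r | P i) sig j (F i).
Proof.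
elim: r => [|a r IH]; first by rewrite !big_nil /sig comp_poly0.
rewrite !big_cons; case: (P a) => //; by rewrite sigD IH.
Qed.
Lemma sig_comp p d f : sig p (sig d f) = sig (p * d) f.
Proof. by rewrite /sig -comp_polyA comp_Xn_poly -exprM. Qed.

Fixpoint sfix {T : Type} (F : (nat -> T) -> nat -> T) (t0 : T) (k n : nat) : T :=
  if k is k'.+1 then F (sfix F t0 k') n else t0.
Definition sfixv {T : Type} (F : (nat -> T) -> nat -> T) (t0 : T) (n : nat) :=
  sfix F t0 n.+1 n.

Lemma sfixE {T : Type} (F : (nat -> T) -> nat -> T) (t0 : T) :
  (forall f f' n, (forall m, (m < n)%N -> f m = f' m) -> F f n = F f' n) ->
  forall n, sfixv F t0 n = F (sfixv F t0) n.
Proof.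
move=> HF.
have st : forall k1 k2 n, (n < k1)%N -> (n < k2)%N -> sfix F t0 k1 n = sfix F t0 k2 n.
  elim=> [|k1 IH] [|k2] n //= h1 h2; apply: HF => m hm.
  by apply: IH; apply: leq_trans hm _; rewrite -ltnS.
move=> n; rewrite /sfixv /=; apply: HF => m hm.
exact: (st _ _ _ hm (ltnSn m)).
Qed.

Section Gam.
Variables g h : {poly int}.

Definition gstep (f : nat -> {poly int}) (n : nat) : {poly int} :=
  qint n g - \sum_(d <- divisors n | d != 1%N) qint d h * sig d (f (n %/ d)%N).

Definition gam := sfixv gstep 0.

Lemma gamE n : gam n = qint n g -
  \sum_(d <- divisors n | d != 1%N) qint d h * sig d (gam (n %/ d)%N).
Proof.
rewrite /gam sfixE //= => f f' m H; rewrite /gstep; congr (_ - _).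
rewrite big_seq_cond [RHS]big_seq_cond; apply: eq_bigr => d /andP [hd d1].
have m0 := mem_div_pos hd d1.
rewrite H //; apply: ltn_Pdiv => //.
have d0 : (0 < d)%N by apply: dvdn_gt0 (div_dvd m0 hd).
by rewrite ltn_neqAle eq_sym d1.
Qed.

Lemma qint1n (R : comPzRingType) (x : R) : qint 1 x = 1.
Proof. by rewrite /qint big_ord1 expr0. Qed.

Lemma gam_id n : (0 < n)%N ->
  qint n g = \sum_(d <- divisors n) qint d h * sig d (gam (n %/ d)%N).
Proof.
move=> n0; rewrite (bigD1_seq 1%N) ?divisor1 ?divisors_uniq //=.
by rewrite qint1n mul1r sig1 divn1 gamE subrK.
Qed.

Lemma gam1 : gam 1 = 1.
Proof.
have := gam_id (isT : (0 < 1)%N).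
have -> : divisors 1 = [:: 1%N] by [].
by rewrite big_seq1 !qint1n mul1r sig1 divn1.
Qed.

End Gam.

Lemma PoszX (p k : nat) : (p ^ k)%N%:Z = p%:Z ^+ k.
Proof. by rewrite -!natz natrX. Qed.

Lemma partE (p n : nat) : (n`_p)%:Z = p%:Z ^+ logn p n.
Proof. by rewrite p_part PoszX. Qed.

Lemma part_mul (p a b : nat) : (0 < a)%N -> (0 < b)%N ->
  ((a * b)`_p)%:Z = (a`_p)%:Z * (b`_p)%:Z.
Proof. by move=> a0 b0; rewrite partnM. Qed.

Lemma part_p'd (p d : nat) : prime p -> ~~ (p %| d)%N -> (d`_p)%N = 1%N.
Proof. by move=> pp hd; apply: part_p'nat; rewrite p'natE. Qed.

Lemma div_split (d n : nat) : (d %| n)%N -> n = (d * (n %/ d))%N.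
Proof. by move=> hd; rewrite mulnC divnK. Qed.

Lemma gam_caseI (p : nat) g h : prime p -> pd p%:Z (1 - g) -> pd p%:Z (1 - h) ->
  forall n, (0 < n)%N -> pd (n`_p)%:Z (gam g h n).
Proof.
move=> pp hg hh; elim/ltn_ind => n IH n0.
rewrite gamE; apply: pdB; first exact: (pd_qint_caseI pp hg n0 (erefl _)).
rewrite big_seq_cond; apply: pd_sum => d /andP [hd d1].
have dn := div_dvd n0 hd.
have d0 : (0 < d)%N by apply: dvdn_gt0 dn.
have q0 : (0 < n %/ d)%N by rewrite divn_gt0 // dvdn_leq.
rewrite [in X in pd X](div_split dn) part_mul //.
apply: pdMM; first exact: (pd_qint_caseI pp hh d0 (erefl _)).
apply: pd_sig => //; apply: IH => //; apply: ltn_Pdiv => //.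
by rewrite ltn_neqAle eq_sym d1.
Qed.

Lemma sigC j c : sig j c%:P = c%:P.
Proof. exact: comp_polyC. Qed.

Section CaseII.
Variables (g h : {poly int}) (c1 c2 : int) (p : nat).
Hypothesis pp : prime p.
Hypothesis hc : c2%:P * (1 - g) = c1%:P * (1 - h).
Hypothesis hnd : ~ pd p%:Z (c1%:P * (1 - h)).

Let gm := gam g h.

Lemma full_id n : (0 < n)%N ->
  c2%:P * (1 - g ^+ n) =
  c1%:P * \sum_(d <- divisors n) (1 - h ^+ d) * sig d (gm (n %/ d)%N).
Proof.
move=> n0; rewrite -qint_tel mulrA hc -mulrA (gam_id g h n0) /gm; congr (_ * _).
rewrite mulr_sumr; apply: eq_bigr => d _; by rewrite mulrA qint_tel.
Qed.

Lemma gam_caseII n : (0 < n)%N -> pd (n`_p)%:Z (gm n).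
Proof.
elim/ltn_ind: n => n IH n0.
have p0 := prime_gt0 pp.
have Y : c1%:P * (1 - h) * gm n = c2%:P * (1 - g ^+ n) -
   c1%:P * \sum_(d <- divisors n | d != 1%N) (1 - h ^+ d) * sig d (gm (n %/ d)%N).
  rewrite full_id // (bigD1_seq 1%N) ?divisor1 ?divisors_uniq //= divn1 sig1 expr1.
  ring.
suff : pd (n`_p)%:Z (c1%:P * (1 - h) * gm n).
  by rewrite p_part; apply: pd_gauss.
rewrite Y.
have [pn|pn] := boolP (p %| n)%N; last first.
  by rewrite part_p'd //; apply: pd1.
set m := (n %/ p)%N.
have hnm : n = (p * m)%N by rewrite /m mulnC divnK.
have m0 : (0 < m)%N by rewrite /m divn_gt0 // dvdn_leq.
have mn : (m < n)%N by rewrite /m ltn_Pdiv // prime_gt1.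
have npart : (n`_p)%:Z = p%:Z ^+ (logn p m).+1.
  by rewrite hnm part_mul // part_pnat_id ?pnat_id // partE exprS.
have Fm := full_id m0.
have Fp : c2%:P * (1 - sig p g ^+ m) = c1%:P *
    \sum_(d <- divisors m) (1 - sig p h ^+ d) * sig (p * d) (gm (m %/ d)%N).
  move: (congr1 (sig p) Fm); rewrite !sigM sigB sig_one sigX sig_sum !sigC => ->.
  congr (_ * _); apply: eq_bigr => d _; by rewrite sigM sigB sig_one sigX sig_comp.
rewrite (bigID (fun d => p %| d)%N) /=.
set S1a := \sum_(d <- divisors n | (d != 1%N) && ~~ (p %| d)%N) _.
rewrite (eq_bigl (fun d => p %| d)%N); last first.
  move=> d /=; apply/andP/idP => [[]//|hd]; split => //.
  by apply/eqP => d1; move: hd; rewrite d1 dvdn1 => /eqP p1; move: (prime_gt1 pp); rewrite p1.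
rewrite sum_div_mul //.
set S3 := \sum_(d <- divisors m) _ in Fp.
set S1b := \sum_(t <- divisors (n %/ p)%N) _.
have e1 : c2%:P * (1 - g ^+ n) = c2%:P * (sig p g ^+ m - g ^+ n) + c2%:P * (1 - sig p g ^+ m).
  by ring.
rewrite e1 Fp.
have e2 : c2%:P * (sig p g ^+ m - g ^+ n) + c1%:P * S3 - c1%:P * (S1b + S1a) =
  c2%:P * (sig p g ^+ m - g ^+ n) - c1%:P * (S1a + (S1b - S3)) by ring.
rewrite e2 /S1b /S3 -sumrB {e1 e2 Fp}.
apply: pdB; apply: pdMr.
  rewrite npart hnm exprM.
  apply: pd_lift_pow => //.
  by rewrite -opprB; apply: pdN; apply: pd_frob.
apply: pdD.
  rewrite /S1a big_seq_cond; apply: pd_sum => d /andP [hd /andP [d1 pd']].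
  have dn := div_dvd n0 hd.
  have d0 : (0 < d)%N by apply: dvdn_gt0 dn.
  have q0 : (0 < n %/ d)%N by rewrite divn_gt0 // dvdn_leq.
  apply: pdMr; apply: pd_sig => //.
  rewrite [in X in pd X](div_split dn) part_mul // part_p'd // mul1r.
  apply: IH => //; apply: ltn_Pdiv => //.
  by rewrite ltn_neqAle eq_sym d1.
rewrite npart big_seq; apply: pd_sum => t ht.
have tm := div_dvd m0 ht.
have t0 : (0 < t)%N by apply: dvdn_gt0 tm.
have q0 : (0 < m %/ t)%N by rewrite divn_gt0 // dvdn_leq.
rewrite -/m hnm divnMl // -mulrBl.
rewrite (_ : 1 - h ^+ (p * t) - (1 - sig p h ^+ t) = sig p h ^+ t - h ^+ (p * t)); last by ring.
have -> : p%:Z ^+ (logn p m).+1 = p%:Z ^+ (logn p t).+1 * ((m %/ t)`_p)%:Z.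
  by rewrite !exprS -!partE {1}(div_split tm) part_mul // mulrA.
apply: pdMM.
  rewrite exprM; apply: pd_lift_pow => //.
  by rewrite -opprB; apply: pdN; apply: pd_frob.
apply: pd_sig; first by rewrite muln_gt0 p0.
apply: IH => //; apply: leq_ltn_trans mn.
by apply: leq_div.
Qed.

End CaseII.

Lemma coprimez_prime (p : nat) (c : int) : prime p -> ~~ (p%:Z %| c)%Z -> coprimez p%:Z c.
Proof. by move=> pp; rewrite coprimezE dvdzE /= prime_coprime. Qed.

Lemma gam_div (g h : {poly int}) (c1 c2 : int) (k : {poly int}) : 1 - g = c1%:P * k -> 1 - h = c2%:P * k ->
  (forall p : nat, prime p -> (p%:Z %| c1)%Z = (p%:Z %| c2)%Z) ->
  primitive_poly k -> forall n, (0 < n)%N -> pd n%:Z (gam g h n).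
Proof.
move=> hg hh hcp [k0 kprim] n n0; apply: pd_partP => // p pp.
have [pc1|pc1] := boolP (p%:Z %| c1)%Z.
  have pc2 : (p%:Z %| c2)%Z by rewrite -hcp.
  apply: gam_caseI => //.
    by rewrite hg => i; rewrite coefCM dvdz_mulr.
  by rewrite hh => i; rewrite coefCM dvdz_mulr.
have pc2 : ~~ (p%:Z %| c2)%Z by rewrite -hcp.
apply: (@gam_caseII g h c1 c2) => //.
  by rewrite hg hh; ring.
rewrite hh => hd.
have : `|p%:Z| = 1.
  apply: kprim => i; move: (hd i); rewrite mulrA -polyCM coefCM.
  by rewrite Gauss_dvdzr // coprimezMr !coprimez_prime.
rewrite -natz normr_nat natz => /eqP; rewrite -[1 : int]/(Posz 1) eqz_nat => /eqP p1.
by move: (prime_gt1 pp); rewrite p1.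
Qed.

Section PsiLemmas.
Variable R : psiQRing.
Implicit Types (x y : R) (f : {poly int}).

Lemma psi0 n : (0 < n)%N -> @psi R n 0 = 0.
Proof.
move=> n0; have h := psiD n0 (0 : R) 0; rewrite addr0 in h.
by apply: (@addrI _ (@psi R n 0)); rewrite addr0 -h.
Qed.
Lemma psiN n x : (0 < n)%N -> @psi R n (- x) = - @psi R n x.
Proof.
move=> n0; apply/eqP; rewrite -subr_eq0 opprK -psiD // addNr psi0 //.
Qed.
Lemma psiB n x y : (0 < n)%N -> @psi R n (x - y) = @psi R n x - @psi R n y.
Proof. by move=> n0; rewrite psiD // psiN. Qed.
Lemma psi_sum n (I : Type) (r : seq I) (P : pred I) (F : I -> R) : (0 < n)%N ->
  @psi R n (\sum_(i <- r | P i) F i) = \sum_(i <- r | P i) @psi R n (F i).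
Proof.
move=> n0; elim: r => [|a r IH]; first by rewrite !big_nil psi0.
by rewrite !big_cons; case: (P a) => //; rewrite psiD // IH.
Qed.
Lemma psi_muln n x k : (0 < n)%N -> @psi R n (x *+ k) = @psi R n x *+ k.
Proof.
move=> n0; elim: k => [|k IH]; first by rewrite !mulr0n psi0.
by rewrite !mulrS psiD // IH.
Qed.
Lemma psi_mulz n x z : (0 < n)%N -> @psi R n (x *~ z) = @psi R n x *~ z.
Proof.
move=> n0; case: z => k; first by rewrite -!pmulrn psi_muln.
by rewrite !NegzE !mulrNz psiN // -!pmulrn psi_muln.
Qed.
Lemma psi_intr n z : (0 < n)%N -> @psi R n (z%:~R) = z%:~R.
Proof. by move=> n0; rewrite psi_mulz // psi1. Qed.
Lemma psiX n x k : (0 < n)%N -> @psi R n (x ^+ k) = @psi R n x ^+ k.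
Proof.
move=> n0; elim: k => [|k IH]; first by rewrite !expr0 psi1.
by rewrite !exprS psiM // IH.
Qed.

Lemma evalq_wide f n : (size f <= n)%N ->
  evalq R f = \sum_(i < n) (f`_i)%:~R * @qe R ^+ i.
Proof.
move=> hn; rewrite /evalq (big_ord_widen n (fun i => (f`_i)%:~R * @qe R ^+ i) hn).
rewrite big_mkcond; apply: eq_bigr => i _; case: ltnP => // hi.
by rewrite nth_default // mul0r.
Qed.

Lemma evalq0 : evalq R 0 = 0.
Proof. by rewrite /evalq size_poly0 big_ord0. Qed.

Lemma evalqD f g : evalq R (f + g) = evalq R f + evalq R g.
Proof.
set n := maxn (size f) (size g).
rewrite !(@evalq_wide _ n) ?leq_maxl ?leq_maxr ?size_polyD //.
by rewrite -big_split; apply: eq_bigr => i _; rewrite coefD intrD mulrDl.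
Qed.

Lemma evalqN f : evalq R (- f) = - evalq R f.
Proof.
rewrite !(@evalq_wide _ (size f)) ?size_polyN // -sumrN.
by apply: eq_bigr => i _; rewrite coefN intrN mulNr.
Qed.

Lemma evalqB f g : evalq R (f - g) = evalq R f - evalq R g.
Proof. by rewrite evalqD evalqN. Qed.

Lemma evalq_sum (I : Type) (r : seq I) (P : pred I) (F : I -> {poly int}) :
  evalq R (\sum_(i <- r | P i) F i) = \sum_(i <- r | P i) evalq R (F i).
Proof.
elim: r => [|a r IH]; first by rewrite !big_nil evalq0.
by rewrite !big_cons; case: (P a) => //; rewrite evalqD IH.
Qed.

Lemma evalqZ c f : evalq R (c *: f) = c%:~R * evalq R f.
Proof.
rewrite !(@evalq_wide _ (size f)) ?size_scale_leq // mulr_sumr.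
by apply: eq_bigr => i _; rewrite coefZ intrM mulrA.
Qed.

Lemma evalq_XnM i f : evalq R ('X^i * f) = @qe R ^+ i * evalq R f.
Proof.
have hs : (size ('X^i * f)%R <= i + size f)%N.
  apply: leq_trans (size_mul_leq _ _) _; rewrite size_polyXn addSn //.
rewrite (evalq_wide hs) big_split_ord /= big1 ?add0r; last first.
  by move=> j _; rewrite coefXnM /= ltn_ord mul0r.
rewrite /evalq mulr_sumr; apply: eq_bigr => j _.
rewrite coefXnM /= ltnNge leq_addr /= addKn exprD.
by rewrite mulrCA.
Qed.

Lemma evalqM f g : evalq R (f * g) = evalq R f * evalq R g.
Proof.
rewrite -[in LHS](coefK f) poly_def mulr_suml evalq_sum.
rewrite [X in _ = X * _]/evalq mulr_suml; apply: eq_bigr => i _.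
by rewrite -scalerAl evalqZ evalq_XnM mulrA.
Qed.

Lemma evalq1 : evalq R 1 = 1.
Proof. by rewrite /evalq size_poly1 big_ord1 coefC /= expr0 mulr1. Qed.

Lemma evalqC c : evalq R c%:P = c%:~R.
Proof.
rewrite (@evalq_wide _ 1) ?size_polyC_leq1 // big_ord1 coefC /=.
by rewrite expr0 mulr1.
Qed.

Lemma evalqXp : evalq R 'X = @qe R.
Proof.
rewrite /evalq size_polyX big_ord_recl big_ord1 !coefX /=.
by rewrite mul0r add0r expr1 mul1r.
Qed.

Lemma evalq_exp f k : evalq R (f ^+ k) = evalq R f ^+ k.
Proof.
elim: k => [|k IH]; first by rewrite !expr0 evalq1.
by rewrite !exprS evalqM IH.
Qed.

Lemma evalq_natr k : evalq R k%:R = k%:R.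
Proof.
elim: k => [|k IH]; first by rewrite evalq0.
by rewrite !mulrS evalqD IH evalq1.
Qed.

Lemma evalq_qint n f : evalq R (qint n f) = qint n (evalq R f).
Proof. by rewrite /qint evalq_sum; apply: eq_bigr => i _; rewrite evalq_exp. Qed.

Lemma psi_evalq j f : (0 < j)%N -> @psi R j (evalq R f) = evalq R (sig j f).
Proof.
move=> j0; rewrite /sig comp_polyE evalq_sum /evalq psi_sum //.
apply: eq_bigr => i _; rewrite psiM // psi_intr // psiX // psi_q //.
by rewrite -/(evalq R _) evalqZ evalq_exp evalq_exp evalqXp.
Qed.

End PsiLemmas.

Section Morph.
Variables (R S : psiQRing) (f : R -> S).
Hypothesis hf : is_psiQ_morph f.

Lemma morph0 : f 0 = 0.
Proof.
case: hf => fD _ _ _ _; have h := fD 0 0; rewrite addr0 in h.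
by apply: (@addrI _ (f 0)); rewrite addr0 -h.
Qed.
Lemma morphN x : f (- x) = - f x.
Proof.
case: hf => fD _ _ _ _; apply/eqP; rewrite -subr_eq0 opprK -fD addNr morph0 //.
Qed.
Lemma morph_sum (I : Type) (r : seq I) (P : pred I) (F : I -> R) :
  f (\sum_(i <- r | P i) F i) = \sum_(i <- r | P i) f (F i).
Proof.
case: hf => fD _ _ _ _; elim: r => [|a r IH]; first by rewrite !big_nil morph0.
by rewrite !big_cons; case: (P a) => //; rewrite fD IH.
Qed.
Lemma morph_muln x k : f (x *+ k) = f x *+ k.
Proof.
case: hf => fD _ _ _ _; elim: k => [|k IH]; first by rewrite !mulr0n morph0.
by rewrite !mulrS fD IH.
Qed.
Lemma morph_intr z : f (z%:~R) = z%:~R.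
Proof.
case: hf => _ _ f1 _ _; case: z => k; first by rewrite -!pmulrn morph_muln f1.
by rewrite !NegzE !mulrNz morphN -!pmulrn morph_muln f1.
Qed.
Lemma morphX x k : f (x ^+ k) = f x ^+ k.
Proof.
case: hf => _ fM f1 _ _; elim: k => [|k IH]; first by rewrite !expr0 f1.
by rewrite !exprS fM IH.
Qed.
Lemma morph_evalq p : f (evalq R p) = evalq S p.
Proof.
rewrite /evalq morph_sum; apply: eq_bigr => i _.
by case: hf => _ fM _ fq _; rewrite fM morph_intr morphX fq.
Qed.
End Morph.

Section Omega.
Variables g h : {poly int}.
Hypothesis Hdiv : forall n, (0 < n)%N -> pd n%:Z (gam g h n).

Definition Wp (m : nat) : {poly int} :=
  \poly_(i < size (gam g h m)) (((gam g h m)`_i) %/ m%:Z)%Z.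

Lemma WpE m : (0 < m)%N -> m%:R * Wp m = gam g h m.
Proof.
move=> m0; apply/polyP => i; rewrite mulr_natl coefMn coef_poly.
case: ltnP => hi; last by rewrite mul0rn nth_default.
by rewrite -mulr_natr natz divzK //; apply: Hdiv.
Qed.

Lemma Wp1 : Wp 1 = 1.
Proof. by move: (WpE (isT : (0 < 1)%N)); rewrite mul1r gam1. Qed.

Definition omg (R : psiQRing) (a : Gseq R) : Gseq R := fun i =>
  \sum_(e <- divisors i.+1) evalq R (Wp (i.+1 %/ e)%N) * @psi R (i.+1 %/ e)%N (a e.-1).

Lemma sig_natr j k : sig j k%:R = k%:R.
Proof. by rewrite -polyC_natr sigC. Qed.

Lemma divn_divn N t : (0 < N)%N -> (t %| N)%N -> (N %/ (N %/ t))%N = t.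
Proof. by move=> N0 tN; rewrite divnA // mulKn. Qed.

Lemma T_sum n e : (0 < n)%N -> (e %| n)%N ->
  \sum_(d <- divisors n | (e %| d)%N)
     d%:R * qint (n %/ d)%N h * sig (n %/ d)%N (Wp (d %/ e)%N)
  = e%:R * qint (n %/ e)%N g.
Proof.
move=> n0 en; rewrite sum_div_mul //.
have e0 : (0 < e)%N by apply: dvdn_gt0 en.
set N := (n %/ e)%N.
have hn : n = (e * N)%N by rewrite /N mulnC divnK.
have N0 : (0 < N)%N by rewrite /N divn_gt0 // dvdn_leq.
rewrite big_seq (eq_bigr (fun t => e%:R * (qint (N %/ t)%N h * sig (N %/ t)%N (gam g h t)))); last first.
  move=> t ht; have tN := div_dvd N0 ht.
  have t0 : (0 < t)%N by apply: dvdn_gt0 tN.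
  rewrite [in (n %/ _)%N]hn divnMl // mulKn // -(WpE t0) sigM sig_natr natrM.
  ring.
rewrite -big_seq -mulr_sumr; congr (_ * _).
rewrite (gam_id g h N0) sum_div_rev // big_seq [RHS]big_seq; apply: eq_bigr => t ht.
by rewrite divn_divn // div_dvd.
Qed.

End Omega.

Section Omega2.
Variables g h : {poly int}.
Hypothesis Hdiv : forall n, (0 < n)%N -> pd n%:Z (gam g h n).

Lemma omg_fact (R : psiQRing) (a : Gseq R) : phibar h (@omg g h R a) = phibar g a.
Proof.
apply: functional_extensionality => i; rewrite /phibar /omg /=.
have n0 : (0 < i.+1)%N by [].
transitivity (\sum_(d <- divisors i.+1) \sum_(e <- divisors d)
   evalq R (d%:R * qint (i.+1 %/ d)%N h * sig (i.+1 %/ d)%N (Wp g h (d %/ e)%N))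
     * @psi R (i.+1 %/ e)%N (a e.-1)).
  rewrite big_seq [RHS]big_seq; apply: eq_bigr => d hd.
  have dn := div_dvd n0 hd.
  have d0 : (0 < d)%N by apply: dvdn_gt0 dn.
  have q0 : (0 < i.+1 %/ d)%N by rewrite divn_gt0 // dvdn_leq.
  rewrite prednK // psi_sum // mulr_sumr big_seq [RHS]big_seq.
  apply: eq_bigr => e he.
  have ed := div_dvd d0 he.
  have e0 : (0 < e)%N by apply: dvdn_gt0 ed.
  have q1 : (0 < d %/ e)%N by rewrite divn_gt0 // dvdn_leq.
  rewrite psiM // psi_comp // muln_divA // divnK // psi_evalq //.
  by rewrite !evalqM evalq_natr evalq_qint mulrA.
rewrite sum_div_exch // big_seq [RHS]big_seq; apply: eq_bigr => e he.
have en := div_dvd n0 he.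
rewrite -mulr_suml -evalq_sum T_sum //.
by rewrite evalqM evalq_natr evalq_qint.
Qed.

Lemma omg_add (R : psiQRing) (a b : Gseq R) :
  @omg g h R (fun i => a i + b i) = (fun i => @omg g h R a i + @omg g h R b i).
Proof.
apply: functional_extensionality => i; rewrite /omg -big_split /=.
rewrite big_seq [RHS]big_seq; apply: eq_bigr => e he.
have en := div_dvd (isT : (0 < i.+1)%N) he.
have e0 : (0 < e)%N by apply: dvdn_gt0 en.
have q0 : (0 < i.+1 %/ e)%N by rewrite divn_gt0 // dvdn_leq.
by rewrite psiD // mulrDr.
Qed.

Lemma omg_nat (R S : psiQRing) (f : R -> S) : is_psiQ_morph f ->
  forall a : Gseq R, @omg g h S (fun i => f (a i)) = (fun i => f (@omg g h R a i)).
Proof.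
move=> hf a; apply: functional_extensionality => i; rewrite /omg morph_sum //.
rewrite big_seq [RHS]big_seq; apply: eq_bigr => e he.
have en := div_dvd (isT : (0 < i.+1)%N) he.
have e0 : (0 < e)%N by apply: dvdn_gt0 en.
have q0 : (0 < i.+1 %/ e)%N by rewrite divn_gt0 // dvdn_leq.
by case: (hf) => _ fM _ _ fpsi; rewrite fM morph_evalq // fpsi.
Qed.

Lemma omg_split (R : psiQRing) (a : Gseq R) i :
  @omg g h R a i = a i + \sum_(e <- divisors i.+1 | e != i.+1)
     evalq R (Wp g h (i.+1 %/ e)%N) * @psi R (i.+1 %/ e)%N (a e.-1).
Proof.
rewrite /omg (bigD1_seq i.+1) ?divisors_id ?divisors_uniq //=.
by rewrite divnn /= Wp1 // evalq1 mul1r psi_id.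
Qed.

Lemma lt_pred_div i e : e \in divisors i.+1 -> e != i.+1 -> (e.-1 < i)%N.
Proof.
move=> he ne; have en := div_dvd (isT : (0 < i.+1)%N) he.
have e0 : (0 < e)%N by apply: dvdn_gt0 en.
have : (e < i.+1)%N by rewrite ltn_neqAle ne dvdn_leq.
by rewrite -(prednK e0) ltnS.
Qed.

Lemma omg_inj (R : psiQRing) (a b : Gseq R) : @omg g h R a = @omg g h R b -> a = b.
Proof.
move=> hab; apply: functional_extensionality; elim/ltn_ind => i IH.
have := congr1 (fun F => F i) hab; rewrite /= !omg_split => H.
suff E : \sum_(e <- divisors i.+1 | e != i.+1)
     evalq R (Wp g h (i.+1 %/ e)%N) * @psi R (i.+1 %/ e)%N (a e.-1) =
   \sum_(e <- divisors i.+1 | e != i.+1)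
     evalq R (Wp g h (i.+1 %/ e)%N) * @psi R (i.+1 %/ e)%N (b e.-1).
  by move: H; rewrite E => /addIr.
rewrite big_seq_cond [RHS]big_seq_cond; apply: eq_bigr => e /andP [he ne].
by rewrite IH // lt_pred_div.
Qed.

Definition invstep (R : psiQRing) (b : Gseq R) (f : nat -> R) (i : nat) : R :=
  b i - \sum_(e <- divisors i.+1 | e != i.+1)
     evalq R (Wp g h (i.+1 %/ e)%N) * @psi R (i.+1 %/ e)%N (f e.-1).

Definition oinv (R : psiQRing) (b : Gseq R) : Gseq R := sfixv (invstep b) 0.

Lemma oinvE (R : psiQRing) (b : Gseq R) i : oinv b i = invstep b (oinv b) i.
Proof.
rewrite /oinv sfixE // => f f' n H; rewrite /invstep; congr (_ - _).
rewrite big_seq_cond [RHS]big_seq_cond; apply: eq_bigr => e /andP [he ne].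
by rewrite H // lt_pred_div.
Qed.

Lemma omg_oinv (R : psiQRing) (b : Gseq R) : @omg g h R (oinv b) = b.
Proof.
apply: functional_extensionality => i.
by rewrite omg_split [oinv b i]oinvE /invstep subrK.
Qed.

Lemma omg_bij (R : psiQRing) : bijective (@omg g h R).
Proof.
exists (@oinv R); last exact: omg_oinv.
by move=> a; apply: omg_inj; rewrite omg_oinv.
Qed.

End Omega2.

Lemma size_mul_pred (F : idomainType) (P Q : {poly F}) : P != 0 -> Q != 0 ->
  (size (P * Q)).-1 = ((size P).-1 + (size Q).-1)%N.
Proof.
move=> P0 Q0; rewrite size_mul //.
have : (0 < size P)%N by rewrite size_poly_gt0.
have : (0 < size Q)%N by rewrite size_poly_gt0.
by case: (size P) => // a; case: (size Q) => // b _ _; rewrite addSn addnS.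
Qed.

Lemma pow_eq_same_lead (F : idomainType) (U V : {poly F}) n :
  U != 0 -> size U = size V -> lead_coef U = lead_coef V -> (0 < n)%N ->
  n%:R != 0 :> F -> U ^+ n = V ^+ n -> U = V.
Proof.
move=> U0 sUV lUV n0 nF hUV; apply/eqP; apply: contraT => D1.
have D0 : U - V != 0 by rewrite subr_eq0.
have V0 : V != 0 by rewrite -size_poly_eq0 -sUV size_poly_eq0.
move/eqP: hUV; rewrite -subr_eq0 subrXX mulf_eq0 (negbTE D0) /= => /eqP hS.
set K := ((size U).-1 * n.-1)%N.
have := congr1 (fun P : {poly F} => P`_K) hS; rewrite coef_sum coef0 /=.
rewrite (eq_bigr (fun _ => lead_coef U ^+ n.-1)); last first.
  move=> i _.
  have hi : (i <= n.-1)%N by rewrite -ltnS prednK.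
  have Ua : U ^+ (n.-1 - i) != 0 by apply: expf_neq0.
  have Vb : V ^+ i != 0 by apply: expf_neq0.
  have -> : K = (size (U ^+ (n.-1 - i) * V ^+ i)).-1.
    by rewrite size_mul_pred // !size_exp -sUV -mulnDr subnK.
  by rewrite -lead_coefE lead_coefM !lead_coef_exp -lUV -exprD subnK.
rewrite sumr_const card_ord -mulr_natl => /eqP; rewrite mulf_eq0 (negbTE nF) /=.
by rewrite expf_eq0 lead_coef_eq0 (negbTE U0) andbF.
Qed.

Lemma pd_all_big f B : (forall p, prime p -> (B < p)%N -> pd p%:Z f) -> f = 0.
Proof.
move=> H; apply/polyP => i; rewrite coef0.
have [p hp pp] := prime_above (maxn B `|f`_i|).
have := H p pp (leq_ltn_trans (leq_maxl _ _) hp) i.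
rewrite dvdzE /=; have [hz|y0] := posnP (absz f`_i).
  by move=> _; apply/eqP; rewrite -absz_eq0 hz.
move/(dvdn_leq y0) => hle.
by move: (leq_ltn_trans hle (leq_ltn_trans (leq_maxr _ _) hp)); rewrite ltnn.
Qed.

Section Fp2.
Variable p : nat.
Hypothesis pp : prime p.

Lemma phi_qint n f : phi p (qint n f) = qint n (phi p f).
Proof. by rewrite /qint /phi rmorph_sum; apply: eq_bigr => i _; rewrite rmorphXn. Qed.

Lemma frob_sub (G : {poly 'F_p}) : (1 - G) ^+ p = 1 - G ^+ p.
Proof.
have hp : p \in [pchar {poly 'F_p}] by rewrite pchar_poly pchar_Fp.
have := pFrobenius_autB_comm hp (mulrC 1 G).
by rewrite !pFrobenius_autE expr1n.
Qed.

Lemma qint_p_eq (G : {poly 'F_p}) : 1 - G != 0 -> qint p G = (1 - G) ^+ p.-1.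
Proof.
move=> G1; apply: (mulfI G1); rewrite qint_tel -frob_sub -exprS prednK //.
exact: prime_gt0.
Qed.

Lemma claimA (G H : {poly 'F_p}) : qint p G = qint p H -> 1 - G = 0 -> 1 - H = 0.
Proof.
move=> hGH /eqP; rewrite subr_eq0 eq_sym => /eqP G1.
have h0 : qint p H = 0.
  rewrite -hGH G1 qint1 -polyC_natr.
  by rewrite pchar_Fp_0 // polyC0.
have : (1 - H) ^+ p = 0 by rewrite frob_sub -qint_tel h0 mulr0.
by move/eqP; rewrite expf_eq0 prime_gt0 //= => /eqP.
Qed.

Lemma claimB (G H : {poly 'F_p}) : qint p G = qint p H -> 1 - G != 0 -> 1 - H != 0 ->
  (1 - G) ^+ p.-1 = (1 - H) ^+ p.-1.
Proof. by move=> hGH G1 H1; rewrite -!qint_p_eq. Qed.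

End Fp2.

Lemma phiB p a b : phi p (a - b) = phi p a - phi p b.
Proof. by rewrite /phi rmorphB. Qed.
Lemma phi1 p : phi p 1 = 1.
Proof. by rewrite /phi rmorph1. Qed.
Lemma phiZ p c f : phi p (c *: f) = (c%:~R : 'F_p) *: phi p f.
Proof. by rewrite /phi map_polyZ. Qed.

Lemma fermat_Fp p (x : 'F_p) : prime p -> x != 0 -> x ^+ p.-1 = 1.
Proof.
move=> pp x0; apply: (mulfI x0); rewrite mulr1 -exprS prednK ?prime_gt0 //.
by have := expf_card x; rewrite card_Fp.
Qed.

Lemma intr_Fp_neq0 p (z : int) : prime p -> z != 0 -> (absz z < p)%N -> (z%:~R : 'F_p) != 0.
Proof.
move=> pp z0 hz; rewrite -(dvdz_pcharf (pchar_Fp pp)) dvdzE /=.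
apply/negP => /(dvdn_leq _) h.
have : (0 < absz z)%N by rewrite absz_gt0.
by move/h => hle; move: (leq_ltn_trans hle hz); rewrite ltnn.
Qed.

Lemma only_if_alg (g h : {poly int}) :
  (forall p, prime p -> pd p%:Z (qint p g - qint p h)) ->
  exists (c1 c2 : int) (k : {poly int}),
     1 - g = c1%:P * k /\ 1 - h = c2%:P * k /\
     (forall p : nat, prime p -> (p%:Z %| c1)%Z = (p%:Z %| c2)%Z) /\
     primitive_poly k.
Proof.
move=> H.
have eqFp : forall p, prime p -> qint p (phi p g) = qint p (phi p h).
  move=> p pp; have := H p pp; move/(pd_Fp pp); rewrite phiB !phi_qint.
  by move/eqP; rewrite subr_eq0 => /eqP.
have AX : forall p, prime p -> pd p%:Z (1 - g) -> pd p%:Z (1 - h).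
  move=> p pp /(pd_Fp pp); rewrite phiB phi1 => hX; apply/(pd_Fp pp).
  by rewrite phiB phi1; apply: (claimA pp (eqFp p pp)).
have AY : forall p, prime p -> pd p%:Z (1 - h) -> pd p%:Z (1 - g).
  move=> p pp /(pd_Fp pp); rewrite phiB phi1 => hX; apply/(pd_Fp pp).
  by rewrite phiB phi1; apply: (claimA pp (esym (eqFp p pp))).
have [X0|X0] := eqVneq (1 - g) 0.
  have Y0 : 1 - h = 0.
    by apply: (pd_all_big (B := 0)) => p pp _; apply: AX => //; rewrite X0; apply: pd0.
  exists 0, 0, 1; rewrite X0 Y0 mul0r; do 3!split => //.
  split; first exact: oner_neq0.
  move=> d /(_ 0%N); rewrite coef1 /= dvdz1 => /eqP hd.
  by rewrite -abszE hd.
have Y0 : 1 - h != 0.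
  apply/eqP => Y0; move/eqP: X0; apply.
  by apply: (pd_all_big (B := 0)) => p pp _; apply: AY => //; rewrite Y0; apply: pd0.
set X := 1 - g in X0 AX AY *; set Y := 1 - h in Y0 AX AY *.
set a := lead_coef X; set b := lead_coef Y.
have a0 : a != 0 by rewrite lead_coef_eq0.
have b0 : b != 0 by rewrite lead_coef_eq0.
have Z0 : b *: X = a *: Y.
  apply/eqP; rewrite -subr_eq0; apply/eqP.
  apply: (pd_all_big (B := absz (a * b))) => p pp hp.
  have ab0 : a * b != 0 by rewrite mulf_neq0.
  have ha : (absz a < p)%N.
    apply: leq_ltn_trans hp; rewrite abszM leq_pmulr // absz_gt0 //.
  have hb : (absz b < p)%N.
    apply: leq_ltn_trans hp; rewrite abszM leq_pmull // absz_gt0 //.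
  have pa := intr_Fp_neq0 pp a0 ha.
  have pb := intr_Fp_neq0 pp b0 hb.
  have sX : size (phi p X) = size X by rewrite /phi size_map_poly_id0.
  have sY : size (phi p Y) = size Y by rewrite /phi size_map_poly_id0.
  have lX : lead_coef (phi p X) = a%:~R by rewrite /phi lead_coef_map_id0.
  have lY : lead_coef (phi p Y) = b%:~R by rewrite /phi lead_coef_map_id0.
  have pX0 : phi p X != 0 by rewrite -size_poly_eq0 sX size_poly_eq0.
  have pY0 : phi p Y != 0 by rewrite -size_poly_eq0 sY size_poly_eq0.
  have hXY : phi p X ^+ p.-1 = phi p Y ^+ p.-1.
    rewrite /X /Y !phiB !phi1; apply: claimB => //; first exact: eqFp.
      by rewrite -phi1 -phiB.
    by rewrite -phi1 -phiB.
  have p1 : (0 < p.-1)%N by rewrite -ltnS prednK ?prime_gt1 ?prime_gt0.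
  have sXY : size (phi p X) = size (phi p Y).
    have := congr1 (fun P : {poly 'F_p} => (size P).-1) hXY; rewrite /= !size_exp.
    move/eqP; rewrite eqn_pmul2r // => /eqP.
    move: pX0 pY0; rewrite -!size_poly_eq0.
    move=> h1 h2 h3; by rewrite -[size (phi p X)]prednK ?lt0n // h3 prednK ?lt0n.
  apply/(pd_Fp pp); rewrite phiB !phiZ; apply/eqP; rewrite subr_eq0; apply/eqP.
  apply: (@pow_eq_same_lead _ _ _ p.-1) => //.
  - by rewrite scaler_eq0 negb_or pb pX0.
  - by rewrite !size_scale.
  - by rewrite !lead_coefZ lX lY mulrC.
  - rewrite -subn1 natrB ?prime_gt0 // pchar_Fp_0 // sub0r oppr_eq0 oner_eq0 //.
  by rewrite !exprZn !fermat_Fp // !scale1r.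
set k := zprimitive X.
have kY : zprimitive Y = k.
  by rewrite -(zprimitiveZ Y a0) -Z0 zprimitiveZ.
exists (zcontents X), (zcontents Y), k.
split; first by rewrite mul_polyC -zpolyEprim.
split; first by rewrite mul_polyC -kY -zpolyEprim.
split.
  move=> p pp; apply/idP/idP => hd.
    by apply/pd_contents; apply: AX => //; apply/pd_contents.
  by apply/pd_contents; apply: AY => //; apply/pd_contents.
split; first by rewrite zprimitive_eq0.
move=> d hd; have := proj1 (pd_contents d k) hd.
rewrite zcontents_primitive X0 dvdz1 => /eqP hd1.
by rewrite -abszE hd1.
Qed.

Definition ZqR : psiQRing.
Proof.
refine (@PsiQRing {poly int} 'X (fun n f => sig n f) _ _ _ _ _ _).
- by move=> n _ x y; apply: sigD.
- by move=> n _ x y; apply: sigM.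
- by move=> n _; apply: sig_one.
- by move=> x; apply: sig1.
- by move=> n m _ _ x; apply: sig_comp.
- by move=> n _; rewrite /sig comp_polyX.
Defined.

Lemma evalq_ZqR f : evalq ZqR f = f.
Proof.
rewrite /evalq -[RHS]coefK poly_def; apply: eq_bigr => i _ /=.
by rewrite -mul_polyC -[f`_i in RHS]intz rmorph_int.
Qed.

Lemma divisors_prime_sum (V : zmodType) (p : nat) (F : nat -> V) : prime p ->
  \sum_(d <- divisors p) F d = F 1%N + F p.
Proof.
move=> pp.
have -> : \sum_(d <- divisors p) F d = \sum_(d <- [:: 1%N; p]) F d.
  apply: perm_big; apply: uniq_perm.
  - exact: divisors_uniq.
  - by rewrite /= inE andbT eq_sym; move: (prime_gt1 pp); case: p {pp} => // [[]].
  move=> d; rewrite -dvdn_divisors ?prime_gt0 // !inE.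
  by case/primeP: pp => _ /(_ d) H; apply/idP/idP => [/H //|/orP [/eqP -> | /eqP ->]] //; apply: dvd1n.
by rewrite big_cons big_seq1.
Qed.

Theorem proposition5p10 (g h : {poly int}) :
  (exists omega : forall R : psiQRing, Gseq R -> Gseq R,
     (* each component is an isomorphism of abelian groups *)
     (forall R : psiQRing, forall a b : Gseq R,
        omega R (fun i => a i + b i) = (fun i => omega R a i + omega R b i)) /\
     (forall R : psiQRing, bijective (omega R)) /\
     (* naturality *)
     (forall (R S : psiQRing) (f : R -> S), is_psiQ_morph f ->
        forall a : Gseq R, omega S (fun i => f (a i)) = (fun i => f (omega R a i))) /\
     (* factorization *)
     (forall (R : psiQRing) (a : Gseq R), phibar g a = phibar h (omega R a)))
  <->
  (exists (c1 c2 : int) (k : {poly int}),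
     1 - g = c1%:P * k /\ 1 - h = c2%:P * k /\
     (forall p : nat, prime p -> (p%:Z %| c1)%Z = (p%:Z %| c2)%Z) /\
     primitive_poly k).
Proof.
split.
  case=> omega [_ [_ [_ Hf]]]; apply: only_if_alg => p pp.
  pose a : Gseq ZqR := fun i => if i == 0%N then 1 else 0.
  have hab := Hf ZqR a; set b := omega ZqR a in hab.
  have h0 := congr1 (fun F => F 0%N) hab.
  have hp := congr1 (fun F => F p.-1) hab.
  rewrite /phibar /= (_ : divisors 1 = [:: 1%N]) // !big_seq1 in h0.
  rewrite /phibar /= prednK ?prime_gt0 // !divisors_prime_sum // in hp.
  move: h0 hp; rewrite !divn1 divnn prime_gt0 // !qint1n !evalq_ZqR /a /=.
  have -> : (p.-1 == 0%N) = false.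
    by apply/negbTE; rewrite -lt0n -ltnS prednK ?prime_gt1 ?prime_gt0.
  rewrite !mul1r !sig1 !sig_one => <-; rewrite !sig_one !mulr1 mulr0 addr0 => ->.
  rewrite (addrC (qint p h)) addrK.
  by move=> i; rewrite -polyC_natr coefCM natz dvdz_mulr.
case=> c1 [c2 [k [hg [hh [hp hk]]]]].
have Hdiv := gam_div hg hh hp hk.
exists (fun R => @omg g h R); split; first exact: omg_add.
split; first exact: omg_bij.
split; first exact: omg_nat.
by move=> R a; rewrite omg_fact.
Qed.
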